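(* Let $\mathcal{D}$ be an algebra of bounded real functions with the Stone property and let $(L,\mathcal{D})$ be a sup-norm-closable Lagrangian. Then its associated energy form $(\mathcal{E}_L,\mathcal{D})$ is a sup-norm-closable bilinear form.
   Context: Stone property: $f\wedge1\in\mathcal{D}$. $T_1(x)=\max(x,0)\wedge1$. A Lagrangian is a symmetric bilinear map $(f,g)\mapsto L_{f,g}$ into the dual $\mathcal{D}'$ of $(\mathcal{D},\|\cdot\|_{\sup})$, with each $L_f:=L_{f,f}$ positive and $L_f-L_{T_1(f)}$ positive for all $f$. A bilinear form is sup-norm-closable if every $\mathcal{E}$-Cauchy $(f_n)$ with $\|f_n\|_{\sup}\to0$ has $\mathcal{E}(f_n)\to0$; a Lagrangian is sup-norm-closable if for each $h\ge0$ in $\mathcal{D}$ the bilinear form $(f,g)\mapsto L_{f,g}(h)$ is sup-norm-closable. The associated energy form is $\mathcal{E}_L(f)=\frac12\|L_f\|_{\mathcal{D}'}$ (with $\|L\|_{\mathcal{D}'}=\sup\{|L(h)|:\|h\|_{\sup}\le1\}$), which satisfies the parallelogram law, polarized to a bilinear form $\mathcal{E}_L(f,g)=\frac14(\mathcal{E}_L(f+g)-\mathcal{E}_L(f-g))$. *)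

(* Defs.v *)
From Stdlib Require Import Reals Lra Classical ClassicalEpsilon.
Open Scope R_scope.

Definition fadd {X} (f g : X -> R) : X -> R := fun x => f x + g x.
Definition fscal {X} (a : R) (f : X -> R) : X -> R := fun x => a * f x.
Definition fmul {X} (f g : X -> R) : X -> R := fun x => f x * g x.
Definition fsub {X} (f g : X -> R) : X -> R := fun x => f x - g x.
Definition fzero {X} : X -> R := fun _ => 0.

Definition sup_le {X} (f : X -> R) (c : R) : Prop := forall x, Rabs (f x) <= c.

Definition bounded_fun {X} (f : X -> R) : Prop := exists c, sup_le f c.

Definition bounded_algebra {X} (D : (X -> R) -> Prop) : Prop :=
  D fzero /\
  (forall f g, D f -> D g -> D (fadd f g)) /\
  (forall a f, D f -> D (fscal a f)) /\
  (forall f g, D f -> D g -> D (fmul f g)) /\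
  (forall f, D f -> bounded_fun f).

Definition stone_property {X} (D : (X -> R) -> Prop) : Prop :=
  forall f, D f -> D (fun x => Rmin (f x) 1).

Definition T1 {X} (f : X -> R) : X -> R := fun x => Rmin (Rmax (f x) 0) 1.

Definition in_dual {X} (D : (X -> R) -> Prop) (l : (X -> R) -> R) : Prop :=
  (forall h1 h2, D h1 -> D h2 -> l (fadd h1 h2) = l h1 + l h2) /\
  (forall a h, D h -> l (fscal a h) = a * l h) /\
  (exists C, forall h c, D h -> sup_le h c -> Rabs (l h) <= C * c).

Definition positive_functional {X} (D : (X -> R) -> Prop) (l : (X -> R) -> R) : Prop :=
  forall h, D h -> (forall x, 0 <= h x) -> 0 <= l h.

Definition lagrangian {X} (D : (X -> R) -> Prop)
    (L : (X -> R) -> (X -> R) -> (X -> R) -> R) : Prop :=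
  (forall f g, D f -> D g -> in_dual D (L f g)) /\
  (forall f g h, D f -> D g -> D h -> L f g h = L g f h) /\
  (forall f1 f2 g h, D f1 -> D f2 -> D g -> D h ->
      L (fadd f1 f2) g h = L f1 g h + L f2 g h) /\
  (forall a f g h, D f -> D g -> D h -> L (fscal a f) g h = a * L f g h) /\
  (forall f, D f -> positive_functional D (L f f)) /\
  (forall f, D f -> D (T1 f) ->
      positive_functional D (fun h => L f f h - L (T1 f) (T1 f) h)).

Definition sup_norm_closable {X} (D : (X -> R) -> Prop)
    (B : (X -> R) -> (X -> R) -> R) : Prop :=
  forall fs : nat -> X -> R,
    (forall n, D (fs n)) ->
    (forall eps, 0 < eps -> exists N, forall n m, (N <= n)%nat -> (N <= m)%nat ->
        Rabs (B (fsub (fs n) (fs m)) (fsub (fs n) (fs m))) < eps) ->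
    (forall eps, 0 < eps -> exists N, forall n, (N <= n)%nat -> sup_le (fs n) eps) ->
    Un_cv (fun n => B (fs n) (fs n)) 0.

Definition lagrangian_sup_norm_closable {X} (D : (X -> R) -> Prop)
    (L : (X -> R) -> (X -> R) -> (X -> R) -> R) : Prop :=
  forall h, D h -> (forall x, 0 <= h x) ->
    sup_norm_closable D (fun f g => L f g h).

Definition dual_norm {X} (D : (X -> R) -> Prop) (l : (X -> R) -> R) : R :=
  epsilon (inhabits 0)
    (is_lub (fun y => exists h, D h /\ sup_le h 1 /\ y = Rabs (l h))).

Definition energy {X} (D : (X -> R) -> Prop)
    (L : (X -> R) -> (X -> R) -> (X -> R) -> R) (f : X -> R) : R :=
  / 2 * dual_norm D (L f f).

Definition energy_form {X} (D : (X -> R) -> Prop)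
    (L : (X -> R) -> (X -> R) -> (X -> R) -> R) (f g : X -> R) : R :=
  / 4 * (energy D L (fadd f g) - energy D L (fsub f g)).

(* Main.v *)
Require Import Defs.
From Stdlib Require Import Reals.
From Stdlib Require Import Lra Classical ClassicalEpsilon FunctionalExtensionality.
Open Scope R_scope.

Section Aux.
Variable X : Type.
Variable D : (X -> R) -> Prop.

Definition dset (l : (X -> R) -> R) :=
  fun y => exists h, D h /\ sup_le h 1 /\ y = Rabs (l h).

Lemma sup_le_zero : sup_le (@fzero X) 1.
Proof. intro x; unfold fzero; rewrite Rabs_R0; lra. Qed.

Lemma dn_lub l : D fzero -> in_dual D l -> is_lub (dset l) (dual_norm D l).
Proof.
  intros D0 [_ [_ [C HC]]]. unfold dual_norm. apply epsilon_spec.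
  destruct (completeness (dset l)) as [m Hm].
  - exists C. intros y [h [Dh [Hh ->]]]. specialize (HC h 1 Dh Hh). lra.
  - exists (Rabs (l fzero)), fzero. split; [exact D0|split; [apply sup_le_zero|reflexivity]].
  - exists m; exact Hm.
Qed.

Lemma dn_ge l h : D fzero -> in_dual D l -> D h -> sup_le h 1 -> Rabs (l h) <= dual_norm D l.
Proof.
  intros D0 Hl Dh Hh. destruct (dn_lub l D0 Hl) as [Hub _]. apply Hub. exists h. auto.
Qed.

Lemma dn_le l M : D fzero -> in_dual D l ->
  (forall h, D h -> sup_le h 1 -> Rabs (l h) <= M) -> dual_norm D l <= M.
Proof.
  intros D0 Hl HM. destruct (dn_lub l D0 Hl) as [_ Hlub]. apply Hlub.
  intros y [h [Dh [Hh ->]]]. auto.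
Qed.

Lemma dn_nonneg l : D fzero -> in_dual D l -> 0 <= dual_norm D l.
Proof.
  intros D0 Hl. apply Rle_trans with (Rabs (l fzero)). apply Rabs_pos.
  apply dn_ge; auto. apply sup_le_zero.
Qed.

Lemma dn_scale l h c : D fzero -> (forall a f, D f -> D (fscal a f)) ->
  in_dual D l -> D h -> sup_le h c -> 0 < c -> Rabs (l h) <= c * dual_norm D l.
Proof.
  intros D0 Dscal Hl Dh Hh Hc.
  assert (H1 : Rabs (l (fscal (/c) h)) <= dual_norm D l).
  { apply dn_ge; auto. intro x. unfold fscal. rewrite Rabs_mult, Rabs_inv, Rabs_pos_eq by lra.
    specialize (Hh x). apply Rmult_le_reg_l with c; auto. field_simplify; lra. }
  destruct Hl as [_ [Hs _]]. rewrite Hs in H1 by auto. rewrite Rabs_mult, Rabs_inv, Rabs_pos_eq in H1 by lra.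
  apply Rmult_le_reg_l with (/c). apply Rinv_0_lt_compat; lra.
  rewrite <- Rmult_assoc, Rinv_l, Rmult_1_l by lra. exact H1.
Qed.

End Aux.

Lemma rmin_scale a c : 0 < c -> c * Rmin (/ c * a) 1 = Rmin a c.
Proof.
  intro Hc. assert (E : a = c * (/ c * a)) by (field; lra).
  unfold Rmin; destruct (Rle_dec (/ c * a) 1); destruct (Rle_dec a c); try nra; try lra.
  all: field; lra.
Qed.

Lemma small_eps x P C : (forall c, 0 < c -> x <= P + C * c) -> x <= P.
Proof.
  intro H. destruct (Rle_or_lt x P) as [|Hlt]; auto.
  set (c := (x - P) / (2 * (Rabs C + 1))).
  assert (Hc : 0 < c) by (unfold c; apply Rdiv_lt_0_compat; [lra| pose proof (Rabs_pos C); lra]).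
  specialize (H c Hc).
  assert (C * c <= Rabs C * c) by (apply Rmult_le_compat_r; [lra| apply Rle_abs]).
  assert (Rabs C * c < x - P).
  { pose proof (Rabs_pos C).
    apply Rle_lt_trans with ((Rabs C + 1) * c). apply Rmult_le_compat_r; lra. unfold c.
    replace ((Rabs C + 1) * ((x - P) / (2 * (Rabs C + 1)))) with ((x-P)/2) by (field; lra). lra. }
  lra.
Qed.

Section Main.
Variable X : Type.
Variable D : (X -> R) -> Prop.
Variable L : (X -> R) -> (X -> R) -> (X -> R) -> R.
Hypothesis HB : bounded_algebra D.
Hypothesis HS : stone_property D.
Hypothesis HL : lagrangian D L.

Lemma D0 : D fzero. Proof. destruct HB as [? _]; auto. Qed.
Lemma Dadd f g : D f -> D g -> D (fadd f g). Proof. destruct HB as [_ [? _]]; auto. Qed.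
Lemma Dscal a f : D f -> D (fscal a f). Proof. destruct HB as [_ [_ [? _]]]; auto. Qed.
Lemma Dbdd f : D f -> bounded_fun f. Proof. destruct HB as [_ [_ [_ [_ ?]]]]; auto. Qed.

Lemma fsub_eq (f g : X -> R) : fsub f g = fadd f (fscal (-1) g).
Proof. apply functional_extensionality; intro x; unfold fsub, fadd, fscal; ring. Qed.

Lemma Dsub f g : D f -> D g -> D (fsub f g).
Proof. intros; rewrite fsub_eq; apply Dadd; auto; apply Dscal; auto. Qed.

Lemma Ldual f g : D f -> D g -> in_dual D (L f g). Proof. destruct HL as [? _]; auto. Qed.
Lemma Lsym f g h : D f -> D g -> D h -> L f g h = L g f h. Proof. destruct HL as [_ [? _]]; auto. Qed.
Lemma Ladd f1 f2 g h : D f1 -> D f2 -> D g -> D h -> L (fadd f1 f2) g h = L f1 g h + L f2 g h.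
Proof. destruct HL as [_ [_ [? _]]]; auto. Qed.
Lemma Lscal a f g h : D f -> D g -> D h -> L (fscal a f) g h = a * L f g h.
Proof. destruct HL as [_ [_ [_ [? _]]]]; auto. Qed.
Lemma Lpos f : D f -> positive_functional D (L f f).
Proof. destruct HL as [_ [_ [_ [_ [? _]]]]]; auto. Qed.

Lemma quad_add a b h : D a -> D b -> D h ->
  L (fadd a b) (fadd a b) h = L a a h + 2 * L a b h + L b b h.
Proof.
  intros Da Db Dh. assert (Dab := Dadd a b Da Db).
  rewrite Ladd by auto. rewrite (Lsym a), (Lsym b) by auto.
  rewrite !Ladd by auto. rewrite (Lsym b a) by auto. ring.
Qed.

Lemma quad_sub a b h : D a -> D b -> D h ->
  L (fsub a b) (fsub a b) h = L a a h - 2 * L a b h + L b b h.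
Proof.
  intros Da Db Dh. rewrite fsub_eq. assert (Db' := Dscal (-1) b Db).
  rewrite quad_add by auto. rewrite (Lsym a (fscal (-1) b)) by auto. rewrite !Lscal by auto.
  rewrite (Lsym b (fscal _ _)) by auto. rewrite Lscal by auto. rewrite (Lsym b a) by auto. ring.
Qed.

Lemma quad_par a b h : D a -> D b -> D h -> (forall x, 0 <= h x) ->
  L (fadd a b) (fadd a b) h <= 2 * L a a h + 2 * L b b h.
Proof.
  intros Da Db Dh Hh. rewrite quad_add by auto.
  assert (H0 : 0 <= L (fsub a b) (fsub a b) h) by (apply Lpos; auto; apply Dsub; auto).
  rewrite quad_sub in H0 by auto. lra.
Qed.

Lemma ef_diag f : D f -> energy_form D L f f = / 2 * dual_norm D (L f f).
Proof.
  intro Df. unfold energy_form, energy. assert (Dff := Dadd f f Df Df).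
  assert (E1 : forall h, D h -> L (fadd f f) (fadd f f) h = 4 * L f f h).
  { intros h Dh. rewrite quad_add by auto. ring. }
  assert (Hd1 := Ldual _ _ Dff Dff). assert (Hd := Ldual _ _ Df Df).
  assert (N1 : dual_norm D (L (fadd f f) (fadd f f)) = 4 * dual_norm D (L f f)).
  { apply Rle_antisym.
    - apply dn_le; auto using D0. intros h Dh Hh. rewrite E1 by auto.
      rewrite Rabs_mult, (Rabs_pos_eq 4) by lra.
      apply Rmult_le_compat_l; [lra|]. apply dn_ge; auto using D0.
    - cut (dual_norm D (L f f) <= / 4 * dual_norm D (L (fadd f f) (fadd f f))); [lra|].
      apply dn_le; auto using D0. intros h Dh Hh.
      replace (L f f h) with (/4 * L (fadd f f) (fadd f f) h) by (rewrite E1 by auto; field).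
      rewrite Rabs_mult, (Rabs_pos_eq (/4)) by lra.
      apply Rmult_le_compat_l; [lra|]. apply dn_ge; auto using D0. }
  assert (Ez : fsub f f = fzero).
  { apply functional_extensionality; intro x; unfold fsub, fzero; ring. }
  assert (Ez2 : (@fzero X) = fscal 0 fzero).
  { apply functional_extensionality; intro x; unfold fscal, fzero; ring. }
  assert (Hz := Ldual _ _ D0 D0).
  assert (N2 : dual_norm D (L fzero fzero) = 0).
  { apply Rle_antisym; [|apply dn_nonneg; auto using D0].
    apply dn_le; auto using D0. intros h Dh _.
    rewrite Ez2 at 1. rewrite Lscal by auto using D0. rewrite Rmult_0_l, Rabs_R0; lra. }
  rewrite N1, Ez, N2. field.
Qed.

Lemma decomp l P : in_dual D l -> positive_functional D l ->
  (forall h, D h -> (forall x, 0 <= h x) -> sup_le h 1 -> l h <= P) ->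
  forall h, D h -> sup_le h 1 -> Rabs (l h) <= P.
Proof.
  intros Hl Hp HP h Dh Hh.
  destruct Hl as [Hla [Hls [C HC]]].
  apply (small_eps _ _ C). intros c Hc.
  set (m := fun g : X -> R => fscal c (fun x => Rmin (fscal (/c) g x) 1)).
  assert (Dm : forall g, D g -> D (m g)).
  { intros g Dg. unfold m. apply Dscal. apply HS. apply Dscal; auto. }
  assert (Em : forall g x, m g x = Rmin (g x) c).
  { intros g x. unfold m, fscal. apply rmin_scale; auto. }
  set (u := fadd h (fscal (-1) (m h))).
  set (v := fadd (fscal (-1) h) (fscal (-1) (m (fscal (-1) h)))).
  set (w := fadd h (fadd (fscal (-1) u) v)).
  assert (Du : D u) by (unfold u; apply Dadd; auto; apply Dscal; auto).
  assert (Dv : D v) by (unfold v; apply Dadd; apply Dscal; auto; apply Dm; apply Dscal; auto).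
  assert (Dw : D w) by (unfold w; apply Dadd; auto; apply Dadd; auto; apply Dscal; auto).
  assert (Elw : l w = l h - l u + l v).
  { unfold w at 1. rewrite Hla by (auto; apply Dadd; auto; apply Dscal; auto).
    rewrite Hla by (auto; apply Dscal; auto). rewrite Hls by auto. ring. }
  assert (Eu : forall x, u x = h x - Rmin (h x) c).
  { intro x. unfold u, fadd, fscal. rewrite Em. ring. }
  assert (Ev : forall x, v x = - h x - Rmin (- h x) c).
  { intro x. unfold v, fadd, fscal. rewrite Em. unfold fscal. replace (-1 * h x) with (- h x) by ring. ring. }
  assert (Ew : forall x, w x = h x - u x + v x).
  { intro x. unfold w, fadd, fscal. ring. }
  assert (Hu0 : forall x, 0 <= u x).
  { intro x. rewrite Eu. unfold Rmin; destruct (Rle_dec _ _); lra. }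
  assert (Hv0 : forall x, 0 <= v x).
  { intro x. rewrite Ev. unfold Rmin; destruct (Rle_dec _ _); lra. }
  assert (Hu1 : sup_le u 1).
  { intro x. specialize (Hh x). rewrite Eu. unfold Rmin; destruct (Rle_dec _ _);
    revert Hh; unfold Rabs; repeat destruct (Rcase_abs _); lra. }
  assert (Hv1 : sup_le v 1).
  { intro x. specialize (Hh x). rewrite Ev. unfold Rmin; destruct (Rle_dec _ _);
    revert Hh; unfold Rabs; repeat destruct (Rcase_abs _); lra. }
  assert (Hwc : sup_le w c).
  { intro x. rewrite Ew, Eu, Ev. unfold Rmin; repeat destruct (Rle_dec _ _);
    unfold Rabs; repeat destruct (Rcase_abs _); lra. }
  assert (Hlw := HC w c Dw Hwc).
  assert (Pu := HP u Du Hu0 Hu1). assert (Pv := HP v Dv Hv0 Hv1).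
  assert (Qu := Hp u Du Hu0). assert (Qv := Hp v Dv Hv0).
  replace (l h) with (l w + l u - l v) by lra.
  revert Hlw; unfold Rabs; repeat destruct (Rcase_abs _); lra.
Qed.

End Main.

Theorem propositionP (X : Type) (D : (X -> R) -> Prop)
    (L : (X -> R) -> (X -> R) -> (X -> R) -> R) :
  bounded_algebra D -> stone_property D ->
  lagrangian D L -> lagrangian_sup_norm_closable D L ->
  sup_norm_closable D (energy_form D L).
Proof.
  intros HB HS HL HC fs Dfs Hcau Hsup.
  assert (D0' := D0 X D HB).
  assert (Dd : forall n m, D (fsub (fs n) (fs m))) by (intros; apply Dsub; auto).
  assert (HA : forall h, D h -> (forall x, 0 <= h x) ->
            Un_cv (fun n => L (fs n) (fs n) h) 0).
  { intros h Dh Hh0. apply (HC h Dh Hh0 fs Dfs); [|exact Hsup].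
    destruct (Dbdd X D HB h Dh) as [c0 Hc0].
    set (c := Rabs c0 + 1).
    assert (Hc : 0 < c) by (unfold c; pose proof (Rabs_pos c0); lra).
    assert (Hhc : sup_le h c).
    { intro x. specialize (Hc0 x). unfold c. pose proof (Rle_abs c0); lra. }
    intros eps Heps.
    destruct (Hcau (eps / (2 * c))) as [N HN].
    { apply Rdiv_lt_0_compat; lra. }
    exists N. intros n m Hn Hm. specialize (HN n m Hn Hm). cbv beta.
    rewrite ef_diag in HN by auto.
    assert (Hdl := Ldual X D L HL _ _ (Dd n m) (Dd n m)).
    assert (Hnn := dn_nonneg X D _ D0' Hdl).
    rewrite Rabs_pos_eq in HN by lra.
    apply Rle_lt_trans with (c * dual_norm D (L (fsub (fs n) (fs m)) (fsub (fs n) (fs m)))).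
    apply dn_scale; auto. intros; apply Dscal; auto.
    apply Rmult_lt_reg_l with (/ (2 * c)). apply Rinv_0_lt_compat; lra.
    replace (/ (2 * c) * (c * dual_norm D (L (fsub (fs n) (fs m)) (fsub (fs n) (fs m)))))
      with (/ 2 * dual_norm D (L (fsub (fs n) (fs m)) (fsub (fs n) (fs m)))) by (field; lra).
    replace (/ (2 * c) * eps) with (eps / (2 * c)) by (field; lra). exact HN. }
  intros eps Heps.
  destruct (Hcau (eps / 8)) as [N HN]; [lra|].
  exists N. intros n Hn. unfold R_dist. rewrite Rminus_0_r.
  rewrite ef_diag by auto.
  assert (Hdn := Ldual X D L HL _ _ (Dfs n) (Dfs n)).
  assert (Hnn := dn_nonneg X D _ D0' Hdn).
  rewrite Rabs_pos_eq by lra.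
  cut (dual_norm D (L (fs n) (fs n)) <= eps / 2); [lra|].
  apply dn_le; auto.
  apply (decomp X D HB HS); auto. apply Lpos; auto.
  intros h Dh Hh0 Hh1.
  assert (Hm : forall m, (N <= m)%nat -> L (fs n) (fs n) h <= eps / 2 + 2 * L (fs m) (fs m) h).
  { intros m Hm. specialize (HN n m Hn Hm).
    rewrite ef_diag in HN by auto.
    assert (Hdl := Ldual X D L HL _ _ (Dd n m) (Dd n m)).
    assert (Hd1 := dn_ge X D _ h D0' Hdl Dh Hh1).
    assert (Hnn2 := dn_nonneg X D _ D0' Hdl).
    rewrite Rabs_pos_eq in HN by lra.
    assert (Ef : fs n = fadd (fsub (fs n) (fs m)) (fs m)).
    { apply functional_extensionality; intro x; unfold fadd, fsub; ring. }
    assert (Hp := quad_par X D L HB HL _ _ h (Dd n m) (Dfs m) Dh Hh0).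
    rewrite <- Ef in Hp.
    pose proof (Rle_abs (L (fsub (fs n) (fs m)) (fsub (fs n) (fs m)) h)).
    lra. }
  apply (small_eps _ _ 2). intros d Hd.
  destruct (HA h Dh Hh0 d Hd) as [M HM].
  specialize (HM (max N M) (Nat.le_max_r _ _)). unfold R_dist in HM.
  rewrite Rminus_0_r in HM.
  specialize (Hm (max N M) (Nat.le_max_l _ _)).
  pose proof (Rle_abs (L (fs (max N M)) (fs (max N M)) h)). lra.
Qed.
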